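(* The class of trivial extensions is Morita invariant: if $A/B$ is a trivial extension and $A/B$ is Morita equivalent to $A'/B'$, then $A'/B'$ is a trivial extension.
   Context: All rings have identity, subrings contain the identity, modules are unital; a ring extension $A/B$ means $B$ is a subring of $A$. $A/B$ is a trivial extension if there is a $B$-$B$-bimodule $S$ with $A=B\oplus S$ and multiplication $(b,s)(c,t)=(bc,bt+sc)$. For bimodules ${}_AX_{A'}$, ${}_AY_{A'}$, write $X\mid Y$ if $X$ is isomorphic to a direct summand of a finite direct sum of copies of $Y$, and $X\sim Y$ if $X\mid Y$ and $Y\mid X$. $\mathrm{End}^r({}_AM)$ denotes the ring of left $A$-endomorphisms of $M$ acting on the right. A bimodule ${}_AM_{A'}$ is a Morita module if ${}_AM\sim{}_AA$ and $\mathrm{End}^r({}_AM)=A'$. Ring extensions $A/B$ and $A'/B'$ are Morita equivalent if there exist Morita modules ${}_AM_{A'}$ and ${}_BN_{B'}$ with ${}_AA\otimes_BN_{B'}\cong{}_AM_{B'}$. A class $\mathscr C$ of ring extensions is Morita invariant if whenever $A/B\in\mathscr C$ and $A/B$ is Morita equivalent to $A'/B'$, then $A'/B'\in\mathscr C$. *)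

(* Defs.v *)
From HB Require Import structures.
From mathcomp Require Import all_boot all_order all_algebra.
Set Implicit Arguments. Unset Strict Implicit. Unset Printing Implicit Defensive.
Import GRing.Theory.
Local Open Scope ring_scope.

(* Rings are [pzRingType]s (associative, with identity; the zero ring allowed).
   A ring extension A/B is given by an injective (unital) ring morphism
   i : B -> A, identifying B with the subring i(B) of A. *)

Definition is_bimod (R S : pzRingType) (X : zmodType)
    (l : R -> X -> X) (r : X -> S -> X) : Prop :=
  (forall a x y, l a (x + y) = l a x + l a y) /\
  (forall a b x, l (a + b) x = l a x + l b x) /\
  (forall x, l 1 x = x) /\
  (forall a b x, l (a * b) x = l a (l b x)) /\
  (forall s x y, r (x + y) s = r x s + r y s) /\
  (forall s t x, r x (s + t) = r x s + r x t) /\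
  (forall x, r x 1 = x) /\
  (forall s t x, r x (s * t) = r (r x s) t) /\
  (forall a x s, l a (r x s) = r (l a x) s).

Definition lhom (R : pzRingType) (X Y : zmodType)
    (lX : R -> X -> X) (lY : R -> Y -> Y) (f : X -> Y) : Prop :=
  (forall x y, f (x + y) = f x + f y) /\ (forall a x, f (lX a x) = lY a (f x)).

(* _R X | _R Y : X is isomorphic to a direct summand of Y^n for some n, i.e.
   there is a split monomorphism X -> Y^n of left R-modules, written out
   componentwise: maps f_i : X -> Y, g_i : Y -> X with sum_i g_i o f_i = id. *)
Definition ldivides (R : pzRingType) (X Y : zmodType)
    (lX : R -> X -> X) (lY : R -> Y -> Y) : Prop :=
  exists (n : nat) (f : 'I_n -> X -> Y) (g : 'I_n -> Y -> X),
    (forall k, lhom lX lY (f k)) /\ (forall k, lhom lY lX (g k)) /\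
    (forall x, \sum_(k < n) g k (f k x) = x).

Definition lsim (R : pzRingType) (X Y : zmodType)
    (lX : R -> X -> X) (lY : R -> Y -> Y) : Prop :=
  ldivides lX lY /\ ldivides lY lX.

(* _R X_S is a Morita module: _R X ~ _R R, and End^r(_R X) = S, i.e. the
   canonical ring map S -> End^r(_R X), s |-> (x |-> x s), is bijective. *)
Definition morita_module (R S : pzRingType) (X : zmodType)
    (l : R -> X -> X) (r : X -> S -> X) : Prop :=
  is_bimod l r /\
  lsim l (fun a b : R => a * b) /\
  (forall f : X -> X, lhom l l f -> exists! s : S, forall x, f x = r x s).

(* _A A (x)_B N_{B'} is isomorphic to _A M_{B'}: there is a B-balanced
   biadditive map beta : A x N -> M making (M, beta) a tensor product of
   A_B and _B N (universal property), and such that the induced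
   isomorphism A (x)_B N -> M, a (x) n |-> beta a n, is A-B'-linear. *)
Definition tensor_iso (A B B' : pzRingType) (i : {rmorphism B -> A})
    (N : zmodType) (lN : B -> N -> N) (rN : N -> B' -> N)
    (M : zmodType) (lM : A -> M -> M) (rM : M -> B' -> M) : Prop :=
  exists beta : A -> N -> M,
    (forall a n1 n2, beta a (n1 + n2) = beta a n1 + beta a n2) /\
    (forall a1 a2 n, beta (a1 + a2) n = beta a1 n + beta a2 n) /\
    (forall a b n, beta (a * i b) n = beta a (lN b n)) /\
    (forall a1 a n, beta (a1 * a) n = lM a1 (beta a n)) /\
    (forall a n b', beta a (rN n b') = rM (beta a n) b') /\
    (forall (P : zmodType) (phi : A -> N -> P),
        (forall a n1 n2, phi a (n1 + n2) = phi a n1 + phi a n2) ->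
        (forall a1 a2 n, phi (a1 + a2) n = phi a1 n + phi a2 n) ->
        (forall a b n, phi (a * i b) n = phi a (lN b n)) ->
        exists! h : M -> P,
          (forall x y, h (x + y) = h x + h y) /\
          (forall a n, h (beta a n) = phi a n)).

Definition morita_equiv_ext (A B A' B' : pzRingType)
    (i : {rmorphism B -> A}) (i' : {rmorphism B' -> A'}) : Prop :=
  exists (M : zmodType) (lM : A -> M -> M) (rM : M -> A' -> M)
         (N : zmodType) (lN : B -> N -> N) (rN : N -> B' -> N),
    morita_module lM rM /\ morita_module lN rN /\
    tensor_iso i lN rN lM (fun x b' => rM x (i' b')).

(* A/B is a trivial extension: A = i(B) (+) S for a sub-i(B)-i(B)-bimodule S
   of A with S * S = 0 (so that (b,s)(c,t) = (bc, bt + sc)). *)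
Definition trivial_ext (A B : pzRingType) (i : {rmorphism B -> A}) : Prop :=
  exists S : A -> Prop,
    S 0 /\
    (forall x y, S x -> S y -> S (x - y)) /\
    (forall b x, S x -> S (i b * x)) /\
    (forall b x, S x -> S (x * i b)) /\
    (forall x y, S x -> S y -> x * y = 0) /\
    (forall a, exists! p : B * A, S p.2 /\ a = i p.1 + p.2).

(* Main.v *)
Set Warnings "-notation-overridden,-ambiguous-paths".
Require Import Defs.
From mathcomp Require Import all_boot all_order all_algebra.
From Stdlib Require Import ClassicalEpsilon.
Set Implicit Arguments. Unset Strict Implicit. Unset Printing Implicit Defensive.
Import GRing.Theory.
Local Open Scope ring_scope.

Lemma addf0 (X Y : zmodType) (f : X -> Y) :
  (forall x y, f (x + y) = f x + f y) -> f 0 = 0.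
Proof.
move=> fD; have h : f 0 + f 0 = f 0 + 0 by rewrite -fD !addr0.
exact: addrI h.
Qed.

Lemma addfB (X Y : zmodType) (f : X -> Y) :
  (forall x y, f (x + y) = f x + f y) -> forall x y, f (x - y) = f x - f y.
Proof.
move=> fD x y; rewrite fD; congr (_ + _).
apply/eqP; rewrite -addr_eq0 -fD addNr; apply/eqP; exact: addf0.
Qed.

Section Tensor.
Variables (A B : pzRingType) (i : {rmorphism B -> A}) (N M : zmodType)
  (lN : B -> N -> N) (beta : A -> N -> M).
Hypothesis b1 : forall a n1 n2, beta a (n1 + n2) = beta a n1 + beta a n2.
Hypothesis b2 : forall a1 a2 n, beta (a1 + a2) n = beta a1 n + beta a2 n.
Hypothesis b3 : forall a b n, beta (a * i b) n = beta a (lN b n).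
Hypothesis Hu : forall (P : zmodType) (phi : A -> N -> P),
        (forall a n1 n2, phi a (n1 + n2) = phi a n1 + phi a n2) ->
        (forall a1 a2 n, phi (a1 + a2) n = phi a1 n + phi a2 n) ->
        (forall a b n, phi (a * i b) n = phi a (lN b n)) ->
        exists! h : M -> P,
          (forall x y, h (x + y) = h x + h y) /\
          (forall a n, h (beta a n) = phi a n).

Lemma GU (P : zmodType) (h1 h2 : M -> P) :
  (forall x y, h1 (x + y) = h1 x + h1 y) ->
  (forall x y, h2 (x + y) = h2 x + h2 y) ->
  (forall a n, h1 (beta a n) = h2 (beta a n)) -> forall m, h1 m = h2 m.
Proof.
move=> D1 D2 E.
have [h [_ U]] := @Hu P (fun a n => h1 (beta a n))
  (fun a n1 n2 => etrans (f_equal h1 (b1 a n1 n2)) (D1 _ _))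
  (fun a1 a2 n => etrans (f_equal h1 (b2 a1 a2 n)) (D1 _ _))
  (fun a b n => f_equal h1 (b3 a b n)).
have e1 := U h1 (conj D1 (fun _ _ => erefl)).
have e2 := U h2 (conj D2 (fun a n => esym (E a n))).
by move=> m; rewrite -e1 -e2.
Qed.

Lemma GU0 (P : zmodType) (h1 : M -> P) :
  (forall x y, h1 (x + y) = h1 x + h1 y) ->
  (forall a n, h1 (beta a n) = 0) -> forall m, h1 m = 0.
Proof.
move=> D1 E m; apply: (@GU P h1 (fun _ => 0)) => //.
by move=> *; rewrite addr0.
Qed.

End Tensor.

Lemma choose_p1 (A B : pzRingType) (i : {rmorphism B -> A}) (S : A -> Prop) :
  (forall a, exists! p : B * A, S p.2 /\ a = i p.1 + p.2) ->
  exists p1 : A -> B, (forall a, S (a - i (p1 a))) /\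
     (forall a b s, S s -> a = i b + s -> p1 a = b).
Proof.
move=> Sdec.
exists (fun a => (proj1_sig (constructive_indefinite_description _ (Sdec a))).1).
split.
- move=> a; case: (constructive_indefinite_description _ (Sdec a)) => [[b s] [[Ss E] _]] /=.
  by rewrite {1}E addrC addKr.
- move=> a b s Ss E; case: (constructive_indefinite_description _ (Sdec a)) => [p [_ U]] /=.
  by rewrite (U (b, s)) //; split.
Qed.

Theorem proposition3p1 (A B A' B' : pzRingType)
    (i : {rmorphism B -> A}) (i' : {rmorphism B' -> A'}) :
  injective i -> injective i' ->
  trivial_ext i -> morita_equiv_ext i i' -> trivial_ext i'.
Proof.
move=> _ _ [S [S0 [SB [SiL [SiR [SS Sdec]]]]]].
move=> [M [lM [rM [N [lN [rN [[bimM [_ uniqM]] [[bimN [_ uniqN]]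
  [beta [b1 [b2 [b3 [b4 [b5 Hu]]]]]]]]]]]]]].
move: bimM => [lMD [lMDl [lM1 [lMM [rMD [rMDr [rM1 [rMM lrM]]]]]]]].
move: bimN => [lND [lNDl [lN1 [lNM [rND [rNDr [rN1 [rNM lrN]]]]]]]].
have GU' := GU b1 b2 b3 Hu.
have GU0' := GU0 b1 b2 b3 Hu.
have SD : forall x y, S x -> S y -> S (x + y).
  move=> x y Sx Sy; have := SB x (0 - y) Sx (SB 0 y S0 Sy).
  by rewrite sub0r opprK.
have [p1 [p1S p1U]] := choose_p1 Sdec.
have p1D : forall a1 a2, p1 (a1 + a2) = p1 a1 + p1 a2.
  move=> a1 a2; apply: (p1U _ _ _ (SD _ _ (p1S a1) (p1S a2))).
  by rewrite rmorphD addrACA !subrKC.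
have p1Mr : forall a b, p1 (a * i b) = p1 a * b.
  move=> a b; apply: (p1U _ _ ((a - i (p1 a)) * i b) (SiR _ _ (p1S a))).
  by rewrite mulrBl rmorphM addrC subrK.
have p1Ml : forall a b, p1 (i b * a) = b * p1 a.
  move=> a b; apply: (p1U _ _ (i b * (a - i (p1 a))) (SiL _ _ (p1S a))).
  by rewrite mulrBr rmorphM addrC subrK.
have p11 : p1 1 = 1.
  by apply: (p1U _ _ 0 S0); rewrite rmorph1 addr0.
have [pi [[piD pibeta] _]] := Hu N (fun a n => lN (p1 a) n)
  (fun a n1 n2 => lND _ _ _)
  (fun a1 a2 n => etrans (f_equal (fun b => lN b n) (p1D a1 a2)) (lNDl _ _ _))
  (fun a b n => etrans (f_equal (fun b => lN b n) (p1Mr a b)) (lNM _ _ _)).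
have pi0 : pi 0 = 0 := addf0 piD.
have piB := addfB piD.
pose io n := beta 1 n.
have ioD : forall x y, io (x + y) = io x + io y by move=> *; exact: b1.
have io0 : io 0 = 0 := addf0 ioD.
have ioB := addfB ioD.
have rMB : forall x s t, rM x (s - t) = rM x s - rM x t.
  by move=> x; apply: (addfB (f := rM x)) => s t; exact: rMDr.
have rM0 : forall x, rM x 0 = 0 by move=> x; apply: (addf0 (f := rM x)) => s t; exact: rMDr.
have rM0l : forall s, rM 0 s = 0 by move=> s; apply: (addf0 (f := rM^~ s)) => x y; exact: rMD.
have rMBl : forall s x y, rM (x - y) s = rM x s - rM y s.
  by move=> s; apply: (addfB (f := rM^~ s)) => x y; exact: rMD.
have rN0l : forall s, rN 0 s = 0 by move=> s; apply: (addf0 (f := rN^~ s)) => x y; exact: rND.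
have lM0 : forall a, lM a 0 = 0 by move=> a; apply: (addf0 (f := lM a)) => x y; exact: lMD.
have lM0l : forall m, lM 0 m = 0 by move=> m; apply: (addf0 (f := lM^~ m)) => x y; exact: lMDl.
have lN0l : forall m, lN 0 m = 0 by move=> m; apply: (addf0 (f := lN^~ m)) => x y; exact: lNDl.
have lMB : forall a x y, lM a (x - y) = lM a x - lM a y.
  by move=> a; apply: (addfB (f := lM a)) => x y; exact: lMD.
have betaB : forall a1 a2 n, beta (a1 - a2) n = beta a1 n - beta a2 n.
  by move=> a1 a2 n; apply: (addfB (f := fun a => beta a n)) => x y; exact: b2.
have F3 : forall m b, pi (rM m (i' b)) = rN (pi m) b.
  move=> m b; apply: (GU' N (fun m => pi (rM m (i' b))) (fun m => rN (pi m) b)).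
  - by move=> x y; rewrite rMD piD.
  - by move=> x y; rewrite piD rND.
  - by move=> a n; rewrite -b5 !pibeta lrN.
have F4 : forall n, pi (io n) = n by move=> n; rewrite /io pibeta p11 lN1.
have F5 : forall n b, rM (io n) (i' b) = io (rN n b) by move=> n b; rewrite /io b5.
have F6 : forall m b, pi (lM (i b) m) = lN b (pi m).
  move=> m b; apply: (GU' N (fun m => pi (lM (i b) m)) (fun m => lN b (pi m))).
  - by move=> x y; rewrite lMD piD.
  - by move=> x y; rewrite piD lND.
  - by move=> a n; rewrite -b4 !pibeta p1Ml lNM.
have F7 : forall n b, io (lN b n) = lM (i b) (io n).
  by move=> n b; rewrite /io -b3 -b4 mul1r mulr1.
have betaio : forall a n, beta a n = lM a (io n) by move=> a n; rewrite /io -b4 mulr1.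
have gen2 : forall a n, beta a n - io (pi (beta a n)) = lM (a - i (p1 a)) (io n).
  by move=> a n; rewrite pibeta F7 -!betaio betaB.
pose S' := fun x : A' => forall n, pi (rM (io n) x) = 0.
have L0 : forall s m, S s -> lM s (m - io (pi m)) = 0.
  move=> s m Ss; apply: (GU0' _ (fun m => lM s (m - io (pi m)))) => [x y|a n].
    rewrite /= piD ioD opprD addrACA. exact: lMD.
  by rewrite /= gen2 -lMM (SS _ _ Ss (p1S a)) lM0l.
have L0' : forall s v, S s -> pi v = 0 -> lM s v = 0.
  by move=> s v Ss pv; rewrite -(L0 s v Ss) pv io0 subr0.
have L : forall y m, S' y -> rM (m - io (pi m)) y = 0.
  move=> y m Sy; apply: (GU0' _ (fun m => rM (m - io (pi m)) y)) => [x z|a n].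
    rewrite /= piD ioD opprD addrACA. exact: rMD.
  by rewrite /= gen2 -lrM (L0' _ _ (p1S a) (Sy n)).
have L' : forall y v, S' y -> pi v = 0 -> rM v y = 0.
  by move=> y v Sy pv; rewrite -(L y v Sy) pv io0 subr0.
exists S'; split; last split; last split; last split; last split.
- by move=> n; rewrite rM0 pi0.
- by move=> x y Sx Sy n; rewrite rMB piB Sx Sy subr0.
- by move=> b x Sx n; rewrite rMM F5 Sx.
- by move=> b x Sx n; rewrite rMM F3 Sx rN0l.
- move=> x y Sx Sy.
  have [s [_ U]] := uniqM (fun _ => 0)
     (conj (fun _ _ => esym (addr0 0)) (fun a _ => esym (lM0 a))).
  have Z : forall m, rM (rM m x) y = 0.
    apply: (GU0' _ (fun m => rM (rM m x) y)) => [m1 m2|a n] /=.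
      by rewrite !rMD.
    by rewrite betaio -!lrM (L' y _ Sy (Sx n)) lM0.
  have e1 : s = x * y by apply: U => m; rewrite rMM Z.
  have e2 : s = 0 by apply: U => m; rewrite rM0.
  by rewrite -e1 e2.
- move=> a'.
  have [b' [Hb' Ub']] := uniqN (fun n => pi (rM (io n) a'))
    (conj (fun n1 n2 => etrans (f_equal pi (etrans (f_equal (rM^~ a') (ioD n1 n2)) (rMD _ _ _))) (piD _ _))
          (fun b n => etrans (f_equal (fun m => pi (rM m a')) (F7 n b))
                      (etrans (f_equal pi (esym (lrM _ _ _))) (F6 _ _)))).
  have Hb n : pi (rM (io n) a') = rN n b' := Hb' n.
  exists (b', a' - i' b'); split.
    split; last by rewrite /= addrC subrK.
    by move=> n /=; rewrite rMB piB F5 F4 Hb subrr.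
  move=> [c s] [/= Ss E].
  have ec : b' = c.
    apply: Ub' => n /=.
    by rewrite E rMDr piD F5 F4 Ss addr0.
  by subst c; rewrite E addrC addKr.
Qed.
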